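(* Let $\vec{D}_n$ be the oriented diameter of the directed arrowhead $\vec{\mathcal{AT}}_n$. Then $\vec{D}_0=0$ and $\vec{D}_n=2\vec{D}_{n-1}+1$ for all $n>0$.
   Context: For $n\in\mathbb{N}$ let $G_n=\mathbb{Z}_{2^n}\times\mathbb{Z}_{2^n}$ (additive group). Let $S^+=\{(-1,-1),(1,0),(0,1)\}$. The directed arrowhead $\vec{\mathcal{AT}}_n$ is the Cayley digraph $\Gamma(G_n,S^+)$: vertex set $G_n$, with an arc $u\to u+s$ for each $u\in G_n$ and $s\in S^+$ (arithmetic modulo $2^n$). The oriented diameter is the maximum, over ordered pairs $(u,v)$ of vertices, of the length of a shortest directed path from $u$ to $v$. *)

(* Defs.v *)
From mathcomp Require Import all_boot.
Set Implicit Arguments. Unset Strict Implicit. Unset Printing Implicit Defensive.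

Lemma pow2_gt0 (n : nat) : 0 < 2 ^ n.
Proof. by rewrite expn_gt0. Qed.

Definition Zm (n : nat) := 'I_(2 ^ n).
Definition G (n : nat) := (Zm n * Zm n)%type.

Definition addm (n : nat) (i : Zm n) (k : nat) : Zm n :=
  Ordinal (ltn_pmod (i + k) (pow2_gt0 n)).

(* Arcs of the Cayley digraph Gamma(G_n, S^+), S^+ = {(-1,-1),(1,0),(0,1)};
   -1 is represented as adding 2^n - 1 modulo 2^n. *)
Definition arc (n : nat) : rel (G n) := fun u v =>
  [|| v == (addm u.1 1, u.2),
      v == (u.1, addm u.2 1)
    | v == (addm u.1 (2 ^ n - 1), addm u.2 (2 ^ n - 1))].

Fixpoint walkb (n k : nat) (u v : G n) : bool :=
  match k with
  | 0 => u == v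
  | k'.+1 => [exists w : G n, arc u w && walkb k' w v]
  end.

(* Length of a shortest directed path from u to v: the least k with a walk
   of length k (searched among 0 .. |G_n|-1, which suffices since a shortest
   walk is a path; returns |G_n| if v is unreachable). *)
Definition dist (n : nat) (u v : G n) : nat :=
  find (fun k => walkb k u v) (iota 0 #|{: G n}|).

Definition odiam (n : nat) : nat :=
  \max_(u : G n) \max_(v : G n) dist u v.

(* Main.v *)
Require Import Defs.
From mathcomp Require Import all_boot zify.

Lemma modeq_lin (N m n c d : nat) : m + c * N = n + d * N -> m = n %[mod N].
Proof.
move=> H; have := congr1 (modn^~ N) H => /=.
by rewrite addnC modnMDl addnC modnMDl.
Qed.

Lemma mod2 (m N : nat) : m < N + N -> m %% N = m \/ m %% N + N = m.
Proof.
move=> H; case: (ltnP m N) => Hm; first by left; rewrite modn_small.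
right; have E : m = (m - N) + N by lia.
rewrite E modnDr modn_small; lia.
Qed.

Lemma pow2_not3 (n k : nat) : 2 ^ n <> 3 * k.
Proof.
move=> H; have : 3 %| 2 ^ n by rewrite H dvdn_mulr.
by rewrite Euclid_dvdX.
Qed.

Lemma reach_ab (N a b : nat) : 0 < N -> (forall k, N <> 3 * k) -> a < N -> b < N ->
  exists x y z c1 c2, x + y + z <= N - 1 /\ a + z = x + c1 * N /\ b + z = y + c2 * N.
Proof.
move=> N0 N3 aN bN.
case: (leqP (a + b) (N - 1)) => h1.
  by exists a, b, 0, 0, 0; lia.
case: (leqP a b) => hab.
- case: (leqP (b + 1) (2 * a)) => h2.
    by exists 0, (b - a), (N - a), 1, 1; lia.
  case: (ltnP a b) => h3; last by exists 0, 0, (N - b), 1, 1; lia.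
  case: (leqP (N + 1 + a) (2 * b)) => h4.
    by exists (a + N - b), 0, (N - b), 0, 1; lia.
  have := N3 a; lia.
- case: (leqP (a + 1) (2 * b)) => h2.
    by exists (a - b), 0, (N - b), 1, 1; lia.
  case: (leqP (N + 1 + b) (2 * a)) => h4.
    by exists 0, (b + N - a), (N - a), 1, 0; lia.
  have := N3 b; lia.
Qed.

Lemma walk_fwd (n k : nat) (u v : G n) : walkb k u v ->
  exists x y z, x + y + z = k /\ (u.1 : nat) + x = v.1 + z %[mod 2 ^ n]
                /\ (u.2 : nat) + y = v.2 + z %[mod 2 ^ n].
Proof.
have N0 := pow2_gt0 n.
elim: k u => [|k IH] u /=.
  by move/eqP=> ->; exists 0, 0, 0.
case/existsP=> w /andP [Harc /IH [x [y [z [Hs [H1 H2]]]]]].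
case/or3P: Harc => /eqP Ew; rewrite {}Ew /= in H1 H2.
- exists x.+1, y, z; split; first lia.
  split; last by [].
  by rewrite -H1 modnDml addn1 addSnnS.
- exists x, y.+1, z; split; first lia.
  split; first by [].
  by rewrite -H2 modnDml addn1 addSnnS.
- exists x, y, z.+1; split; first lia.
  split.
  + rewrite addnS -[(v.1 + z).+1]addn1 -(modnDml (v.1 + z)) -H1 !modnDml.
    rewrite -addnA modnDml.
    have -> : u.1 + (2 ^ n - 1) + (x + 1) = u.1 + x + 2 ^ n by lia.
    by rewrite modnDr.
  + rewrite addnS -[(v.2 + z).+1]addn1 -(modnDml (v.2 + z)) -H2 !modnDml.
    rewrite -addnA modnDml.
    have -> : u.2 + (2 ^ n - 1) + (y + 1) = u.2 + y + 2 ^ n by lia.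
    by rewrite modnDr.
Qed.

Lemma walk_bwd (n : nat) (x y z : nat) (u v : G n) :
  (u.1 : nat) + x = v.1 + z %[mod 2 ^ n] ->
  (u.2 : nat) + y = v.2 + z %[mod 2 ^ n] -> walkb (x + y + z) u v.
Proof.
have N0 := pow2_gt0 n.
suff: forall s x y z (u : G n), x + y + z = s -> (u.1 : nat) + x = v.1 + z %[mod 2 ^ n] ->
  (u.2 : nat) + y = v.2 + z %[mod 2 ^ n] -> walkb s u v.
  by move=> H; apply: H.
move=> {x y z u} s.
elim: s => [|s IH] x y z u Es H1 H2 /=.
  move: H1 H2; have [-> [-> ->]] : x = 0 /\ y = 0 /\ z = 0 by lia.
  rewrite !addn0 !modn_small // => H1 H2.
  case: u H1 H2 => [u1 u2]; case: v => [v1 v2] /= H1 H2.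
  by apply/eqP; congr pair; apply: val_inj.
apply/existsP.
case: x Es H1 => [|x] Es H1.
  case: y Es H2 => [|y] Es H2.
    case: z Es H1 H2 => [|z] Es H1 H2; first by [].
    exists (addm u.1 (2 ^ n - 1), addm u.2 (2 ^ n - 1)).
    apply/andP; split; first by rewrite /Defs.arc /= !eqxx !orbT.
    rewrite addn0 in H1; rewrite addn0 in H2.
    apply: (IH 0 0 z); first lia.
    + rewrite /= addn0 modn_mod -modnDml H1 modnDml.
      have -> : v.1 + z.+1 + (2 ^ n - 1) = v.1 + z + 2 ^ n by lia.
      by rewrite modnDr.
    + rewrite /= addn0 modn_mod -modnDml H2 modnDml.
      have -> : v.2 + z.+1 + (2 ^ n - 1) = v.2 + z + 2 ^ n by lia.
      by rewrite modnDr.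
  exists (u.1, addm u.2 1).
  apply/andP; split; first by rewrite /Defs.arc /= eqxx orbT.
  apply: (IH 0 y z); first lia.
  + by [].
  + by rewrite /= modnDml addn1 addSnnS.
exists (addm u.1 1, u.2).
apply/andP; split; first by rewrite /Defs.arc /= eqxx.
apply: (IH x y z); first lia.
+ by rewrite /= modnDml addn1 addSnnS.
+ by [].
Qed.

Lemma card_G (n : nat) : #|{: G n}| = 2 ^ n * 2 ^ n.
Proof. by rewrite card_prod card_ord. Qed.

Lemma dist_le (n k : nat) (u v : G n) : k < #|{: G n}| -> walkb k u v -> dist u v <= k.
Proof.
move=> Hk Hw; rewrite /dist; case: (leqP (find (fun k => walkb k u v) (iota 0 #|{: G n}|)) k) => // Hf.
have := before_find 0 Hf; rewrite nth_iota // add0n Hw //.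
Qed.

Lemma dist_ge (n k : nat) (u v : G n) : k <= #|{: G n}| ->
  (forall j, j < k -> ~~ walkb j u v) -> k <= dist u v.
Proof.
move=> Hk Hw; rewrite /dist; set f := find _ _.
case: (leqP k f) => // Hf.
have Hs : has (fun k => walkb k u v) (iota 0 #|{: G n}|).
  by rewrite has_find size_iota; apply: leq_trans Hf Hk.
have := nth_find 0 Hs; rewrite -/f nth_iota ?add0n; last by apply: leq_trans Hf Hk.
by move: (Hw f Hf) => /negP.
Qed.

Lemma dist_upper (n : nat) (u v : G n) : dist u v <= 2 ^ n - 1.
Proof.
have N0 := pow2_gt0 n.
have [a [aN Ea]] : exists a, a < 2 ^ n /\ (u.1 : nat) + a = v.1 %[mod 2 ^ n].
  case: (leqP (u.1 : nat) v.1) => h.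
    by exists (v.1 - u.1); split; [have := ltn_ord v.1; lia | congr modn; lia].
  exists (v.1 + 2 ^ n - u.1); split; first by have := ltn_ord u.1; lia.
  by rewrite -(modnDr v.1); congr modn; have := ltn_ord u.1; lia.
have [b [bN Eb]] : exists b, b < 2 ^ n /\ (u.2 : nat) + b = v.2 %[mod 2 ^ n].
  case: (leqP (u.2 : nat) v.2) => h.
    by exists (v.2 - u.2); split; [have := ltn_ord v.2; lia | congr modn; lia].
  exists (v.2 + 2 ^ n - u.2); split; first by have := ltn_ord u.2; lia.
  by rewrite -(modnDr v.2); congr modn; have := ltn_ord u.2; lia.
have [x [y [z [c1 [c2 [Hs [H1 H2]]]]]]] := @reach_ab (2 ^ n) a b N0 (@pow2_not3 n) aN bN.
apply: leq_trans (Hs); apply: dist_le.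
  rewrite card_G; apply: leq_ltn_trans (Hs) _.
  move: N0; set N := 2 ^ n => N0; nia.
apply: walk_bwd.
- rewrite -(modnDml v.1) -Ea modnDml -addnA H1 addnA; apply/esym.
  by rewrite addnC modnMDl.
- rewrite -(modnDml v.2) -Eb modnDml -addnA H2 addnA; apply/esym.
  by rewrite addnC modnMDl.
Qed.

Lemma far (N : nat) : 0 < N -> exists a b, a < N /\ b < N /\
  forall x y z, x = a + z %[mod N] -> y = b + z %[mod N] -> N - 1 <= x + y + z.
Proof.
move=> N0; exists (N %/ 3), (N - 1 - N %/ 3).
have E := divn_eq N 3; have r3 : N %% 3 < 3 by rewrite ltn_mod.
move: E r3; set a := N %/ 3; set r := N %% 3 => E r3.
split; first lia. split; first lia.
move=> x y z Hx Hy.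
case: (leqP (N - 1) (x + y + z)) => // Hs.
have xN : x < N by lia.
have yN : y < N by lia.
rewrite (modn_small xN) in Hx; rewrite (modn_small yN) in Hy.
have [h1|h1] := @mod2 (a + z) N ltac:(lia);
have [h2|h2] := @mod2 (N - 1 - a + z) N ltac:(lia); lia.
Qed.

Lemma dist_lower (n : nat) : exists u v : G n, 2 ^ n - 1 <= dist u v.
Proof.
have N0 := pow2_gt0 n.
have [a [b [aN [bN Hf]]]] := @far (2 ^ n) N0.
exists (Ordinal N0, Ordinal N0), (Ordinal aN, Ordinal bN).
apply: dist_ge.
  rewrite card_G; move: N0; set N := 2 ^ n => N0; nia.
move=> j Hj; apply/negP => /walk_fwd [x [y [z [Hs [H1 H2]]]]].
move: H1 H2 => /= H1 H2.
have := Hf x y z ltac:(by rewrite -H1) ltac:(by rewrite -H2); lia.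
Qed.

Lemma odiam_eq (n : nat) : odiam n = 2 ^ n - 1.
Proof.
apply/eqP; rewrite eqn_leq; apply/andP; split.
  apply/bigmax_leqP => u _; apply/bigmax_leqP => v _; exact: dist_upper.
have [u [v H]] := dist_lower n.
rewrite /odiam; apply: (leq_trans H).
set F := fun u0 : G n => \max_(v0 : G n) dist u0 v0.
have H1 : dist u v <= F u by rewrite /F; exact: (bigmax_sup v).
by apply: (bigmax_sup u).
Qed.

Theorem lemma3 :
  odiam 0 = 0 /\ (forall n : nat, 0 < n -> odiam n = 2 * odiam n.-1 + 1).
Proof.
split; first by rewrite odiam_eq.
case=> // n _; rewrite !odiam_eq /= expnS.
have := pow2_gt0 n; lia.
Qed.
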